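(* Let $\eta\in\Upsilon_{z_0}$ and let $(u_M,M)$ and $(v_M,M)$ denote the states of $\widetilde{\mathbf M}_\eta$ and $\widehat{\mathbf M}_\eta$, respectively, at time $M$. Then, for each $M$, $v_M$ has the same distribution as the unique element of $\widehat W$ lying in the coset $u_MW=\{u_Mw:w\in W\}$.
   Context: Let $\Phi$ be a finite irreducible crystallographic root system with simple roots $\{\alpha_i:i\in I\}$, highest root $\theta$, Weyl group $W$ and affine Weyl group $\widetilde W$ with simple reflections $s_i$, $i\in\widetilde I=\{0\}\sqcup I$; $Q^\vee\subseteq V^*$ is the coroot lattice. $\mathcal H_{\widetilde W}=\{\mathrm H_\beta^k=\{\gamma\in V^*:\gamma(\beta)=k\}:\beta\in\Phi^+,k\in\mathbb Z\}$. $\widetilde W$ acts faithfully on $V^*$ on the right, $s_i$ ($i\in I$) reflecting through $\mathrm H^0_{\alpha_i}$ and $s_0$ through $\mathrm H^1_\theta$; $W=\langle s_i:i\in I\rangle$. $\mathcal C=\{\gamma:\gamma(\alpha_i)\ge0\ \forall i\in I\}$, $\mathcal A=\{\gamma\in\mathcal C:\gamma(\theta)\le1\}$, $u\mapsto\mathcal A u$ bijects $\widetilde W$ onto alcoves; $\mathrm H^{(u,s_i)}$ separates $\mathcal A u$ and $\mathcal A s_iu$. $\widehat W=\{w\in\widetilde W:\mathcal A w\subseteq\mathcal C\}$ (each coset $uW$ contains exactly one element of $\widehat W$). Fix $z_0$ in the interior of $\mathcal A$ and $p\in(0,1)$. $\Upsilon_{z_0}$: the set of $\eta\in Q^\vee\setminus\{0\}$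 whose ray from $z_0$ avoids intersections of two or more hyperplanes of $\mathcal H_{\widetilde W}$. For such $\eta$, if the ray passes successively through $\mathcal A u_0=\mathcal A,\mathcal A u_1,\dots$, define $i_j$ by $u_{j+1}=s_{i_j}u_j$; the sequence is periodic with period $N_\eta$. $\widetilde{\mathbf M}_\eta$ is the Markov chain on $\widetilde W\times\mathbb Z/N_\eta\mathbb Z$ started at $(\mathbbm 1,0)$: from $(u,k)$, if $\mathrm H^{(u,s_{i_k})}$ does not separate $\mathcal A u$ from $\mathcal A$, go to $(s_{i_k}u,k+1)$ with probability $p$, else to $(u,k+1)$ with probability $1-p$; if it does separate them, go to $(u,k+1)$. $\widehat{\mathbf M}_\eta$ on $\widehat W\times\mathbb Z/N_\eta\mathbb Z$ is identical except that the move to $(s_{i_k}u,k+1)$ is only allowed (with probability $p$) when also $\mathcal A s_{i_k}u\subseteq\mathcal C$. *)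

(* Defs.v *)
From HB Require Import structures.
From mathcomp Require Import all_boot all_order all_algebra.
From mathcomp Require Import boolp classical_sets reals.

Set Implicit Arguments.
Unset Strict Implicit.
Unset Printing Implicit Defensive.

Import Order.TTheory GRing.Theory Num.Theory.
Local Open Scope ring_scope.
Local Open Scope classical_set_scope.

Section Defs.
Variable R : realType.
Variable n : nat.
Local Notation V := 'rV[R]_n.

(** Euclidean pairing; V and V* are both identified with R^n. *)
Definition rdot (x y : V) : R := \sum_(i < n) x 0 i * y 0 i.

Definition coroot (b : V) : V := (2 / rdot b b) *: b.

Definition refl (b : V) (k : R) (g : V) : V := g - (rdot g b - k) *: coroot b.

Definition is_root_system (Phi : seq V) : Prop :=
  [/\ (forall a, a \in Phi -> a != 0),
      (forall v : V, exists c : 'I_(size Phi) -> R,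
          v = \sum_(j < size Phi) c j *: Phi`_j),
      (forall a b, a \in Phi -> b \in Phi -> refl a 0 b \in Phi),
      (forall a b, a \in Phi -> b \in Phi ->
          exists z : int, 2 * rdot b a / rdot a a = z%:~R) &
      (forall a b (c : R), a \in Phi -> b \in Phi -> b = c *: a ->
          c = 1 \/ c = -1)].

Definition irreducible_rs (Phi : seq V) : Prop :=
  Phi <> [::] /\
  forall P : V -> Prop,
    (exists2 a, a \in Phi & P a) -> (exists2 b, b \in Phi & ~ P b) ->
    exists a b, [/\ a \in Phi, b \in Phi, P a, ~ P b & rdot a b != 0].

Definition zcomb (alpha : 'I_n -> V) (c : 'I_n -> int) : V :=
  \sum_(i < n) (c i)%:~R *: alpha i.

Definition is_base (Phi : seq V) (alpha : 'I_n -> V) : Prop :=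
  [/\ (forall i, alpha i \in Phi),
      (forall c : 'I_n -> R, \sum_(i < n) c i *: alpha i = 0 -> forall i, c i = 0) &
      (forall b, b \in Phi -> exists c : 'I_n -> int,
          b = zcomb alpha c /\ ((forall i, 0 <= c i) \/ (forall i, c i <= 0)))].

Definition pos_root (Phi : seq V) (alpha : 'I_n -> V) (b : V) : Prop :=
  b \in Phi /\ exists c : 'I_n -> int, b = zcomb alpha c /\ forall i, 0 <= c i.

Definition is_highest_root (Phi : seq V) (alpha : 'I_n -> V) (theta : V) : Prop :=
  pos_root Phi alpha theta /\
  forall b, pos_root Phi alpha b ->
    exists d : 'I_n -> int, theta - b = zcomb alpha d /\ forall i, 0 <= d i.

Definition hyp (b : V) (k : R) : set V := [set g | rdot g b = k].

Definition coroot_lattice (alpha : 'I_n -> V) (eta : V) : Prop :=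
  exists c : 'I_n -> int, eta = \sum_(i < n) (c i)%:~R *: coroot (alpha i).

Definition Cone (alpha : 'I_n -> V) : set V :=
  [set g | forall i, 0 <= rdot g (alpha i)].

Definition Afund (alpha : 'I_n -> V) (theta : V) : set V :=
  [set g | (forall i, 0 <= rdot g (alpha i)) /\ rdot g theta <= 1].

(** Affine Weyl group: words over I~ = {0} + I, encoded as option 'I_n
    (None = 0).  The word [:: a1; ...; ak] stands for s_a1 ... s_ak, acting on
    the right: g (s_a1 ... s_ak) = (...(g s_a1)...) s_ak. *)
Definition sgen (alpha : 'I_n -> V) (theta : V) (i : option 'I_n) : V -> V :=
  match i with None => refl theta 1 | Some j => refl (alpha j) 0 end.

Definition act (alpha : 'I_n -> V) (theta : V) (u : seq (option 'I_n)) (g : V) : V :=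
  foldl (fun h i => sgen alpha theta i h) g u.

(** equality in the affine Weyl group (the action is faithful) *)
Definition weq alpha theta (u v : seq (option 'I_n)) : Prop :=
  forall g, act alpha theta u g = act alpha theta v g.

Definition alcove alpha theta (u : seq (option 'I_n)) : set V :=
  act alpha theta u @` Afund alpha theta.

Definition wall alpha theta (i : option 'I_n) : set V :=
  match i with None => hyp theta 1 | Some j => hyp (alpha j) 0 end.

(** H^{(u,s_i)} : the hyperplane separating A u and A s_i u ( = (wall_i) u ) *)
Definition Hsep alpha theta (u : seq (option 'I_n)) (i : option 'I_n) : set V :=
  act alpha theta u @` wall alpha theta i.

Definition separates (H X Y : set V) : Prop :=
  exists (b : V) (c : R), [/\ b != 0, H = [set g | rdot g b = c],
    X `<=` [set g | rdot g b <= c] & Y `<=` [set g | c <= rdot g b]].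

Definition in_Upsilon (Phi : seq V) alpha (z0 eta : V) : Prop :=
  [/\ coroot_lattice alpha eta, eta != 0 &
      forall t : R, 0 <= t -> forall b b' (k k' : int),
        pos_root Phi alpha b -> pos_root Phi alpha b' ->
        hyp b k%:~R <> hyp b' k'%:~R ->
        ~ (hyp b k%:~R (z0 + t *: eta) /\ hyp b' k'%:~R (z0 + t *: eta))].

Fixpoint uword (i : nat -> option 'I_n) (j : nat) : seq (option 'I_n) :=
  if j is j'.+1 then i j' :: uword i j' else [::].

Definition ray_alcove_seq alpha theta (z0 eta : V) (i : nat -> option 'I_n) : Prop :=
  exists tt : nat -> R,
    [/\ tt 0%N = 0, (forall j, tt j < tt j.+1),
        (forall t, 0 <= t -> exists j, tt j <= t <= tt j.+1) &
        (forall j t, tt j <= t <= tt j.+1 ->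
           alcove alpha theta (uword i j) (z0 + t *: eta))].

Definition is_min_period (i : nat -> option 'I_n) (N : nat) : Prop :=
  [/\ (0 < N)%N, (forall j, i (j + N)%N = i j) &
      forall N', (0 < N')%N -> (forall j, i (j + N')%N = i j) -> (N <= N')%N].

(** x is the element of What lying in the coset u W *)
Definition is_hat_rep alpha theta (u x : seq (option 'I_n)) : Prop :=
  alcove alpha theta x `<=` Cone alpha /\
  exists w : seq 'I_n, weq alpha theta x (u ++ map Some w).

Definition state := (seq (option 'I_n) * nat)%type.

Definition tilde_kernel alpha theta (i : nat -> option 'I_n) (N : nat) (p : R)
    (x : state) : seq (state * R) :=
  let u := x.1 in let s := i x.2 in let k' := (x.2.+1 %% N)%N in
  if `[< separates (Hsep alpha theta u s) (alcove alpha theta u) (Afund alpha theta) >]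
  then [:: ((u, k'), 1)]
  else [:: ((s :: u, k'), p); ((u, k'), 1 - p)].

Definition hat_kernel alpha theta (i : nat -> option 'I_n) (N : nat) (p : R)
    (x : state) : seq (state * R) :=
  let u := x.1 in let s := i x.2 in let k' := (x.2.+1 %% N)%N in
  if `[< ~ separates (Hsep alpha theta u s) (alcove alpha theta u) (Afund alpha theta)
         /\ alcove alpha theta (s :: u) `<=` Cone alpha >]
  then [:: ((s :: u, k'), p); ((u, k'), 1 - p)]
  else [:: ((u, k'), 1)].

End Defs.

(** Generic finitely-branching Markov chain: law at time M as a weighted list
    of states (path expansion). *)
Section Markov.
Variable R : realType.
Variable S : Type.

Definition mstep (K : S -> seq (S * R)) (d : seq (S * R)) : seq (S * R) :=
  flatten [seq [seq (y.1, x.2 * y.2) | y <- K x.1] | x <- d].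

Definition mdist (K : S -> seq (S * R)) (s0 : S) (M : nat) : seq (S * R) :=
  iter M (mstep K) [:: (s0, 1)].

Definition mprob (d : seq (S * R)) (P : S -> Prop) : R :=
  \sum_(x <- d) (if `[< P x.1 >] then x.2 else 0).
End Markov.

(* Main.v *)
Require Import Defs.
From HB Require Import structures.
From mathcomp Require Import all_boot all_order all_algebra.
From mathcomp Require Import boolp classical_sets reals.
From mathcomp Require Import ring lra zify.
Import Order.TTheory GRing.Theory Num.Theory.
Local Open Scope ring_scope.

Set Implicit Arguments.
Unset Strict Implicit.
Unset Printing Implicit Defensive.


Section Lin.
Variable R : realType.
Variable n : nat.
Local Notation V := 'rV[R]_n.

Lemma rdotC (x y : V) : rdot x y = rdot y x.
Proof. by apply: eq_bigr => i _; rewrite mulrC. Qed.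

Lemma rdotDl (x y z : V) : rdot (x + y) z = rdot x z + rdot y z.
Proof. by rewrite /rdot -big_split; apply: eq_bigr => i _; rewrite !mxE mulrDl. Qed.

Lemma rdotZl a (x y : V) : rdot (a *: x) y = a * rdot x y.
Proof. by rewrite /rdot mulr_sumr; apply: eq_bigr => i _; rewrite !mxE mulrA. Qed.

Lemma rdotNl (x y : V) : rdot (- x) y = - rdot x y.
Proof. by rewrite -scaleN1r rdotZl mulN1r. Qed.

Lemma rdotBl (x y z : V) : rdot (x - y) z = rdot x z - rdot y z.
Proof. by rewrite rdotDl rdotNl. Qed.

Lemma rdot0l (y : V) : rdot 0 y = 0.
Proof. by rewrite -(scale0r 0) rdotZl mul0r. Qed.

Lemma rdotDr (x y z : V) : rdot z (x + y) = rdot z x + rdot z y.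
Proof. by rewrite rdotC rdotDl !(rdotC z). Qed.
Lemma rdotZr a (x y : V) : rdot y (a *: x) = a * rdot y x.
Proof. by rewrite rdotC rdotZl rdotC. Qed.
Lemma rdotNr (x y : V) : rdot y (- x) = - rdot y x.
Proof. by rewrite rdotC rdotNl rdotC. Qed.
Lemma rdotBr (x y z : V) : rdot z (x - y) = rdot z x - rdot z y.
Proof. by rewrite rdotDr rdotNr. Qed.
Lemma rdot0r (y : V) : rdot y 0 = 0.
Proof. by rewrite rdotC rdot0l. Qed.

Lemma rdot_ge0 (x : V) : 0 <= rdot x x.
Proof. by apply: sumr_ge0 => i _; rewrite -expr2 sqr_ge0. Qed.

Lemma rdot_eq0 (x : V) : rdot x x = 0 -> x = 0.
Proof.
move=> /eqP; rewrite psumr_eq0 => [/allP H|i _]; last by rewrite -expr2 sqr_ge0.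
apply/rowP => i; rewrite mxE; have := H i (mem_index_enum i).
by rewrite /= mulf_eq0 orbb => /eqP.
Qed.

Lemma rdot_gt0 (x : V) : x != 0 -> 0 < rdot x x.
Proof.
move=> nz; rewrite lt_def rdot_ge0 andbT; apply/eqP => /rdot_eq0 h.
by rewrite h eqxx in nz.
Qed.

Lemma rdot_ext (a b : V) : (forall y, rdot y a = rdot y b) -> a = b.
Proof.
move=> H; apply/eqP; rewrite -subr_eq0; apply/eqP/rdot_eq0.
by rewrite rdotBr H subrr.
Qed.

Lemma rdot_coroot (b c : V) : rdot (coroot b) c = 2 * rdot b c / rdot b b.
Proof. by rewrite /coroot rdotZl mulrAC mulrC mulrA. Qed.

Lemma coroot_self (b : V) : b != 0 -> rdot (coroot b) b = 2.
Proof.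
move=> nz; rewrite rdot_coroot mulfK //; apply/lt0r_neq0/rdot_gt0/nz.
Qed.

Lemma refl_dot b k (g c : V) :
  rdot (refl b k g) c = rdot g c - (rdot g b - k) * rdot (coroot b) c.
Proof. by rewrite /refl rdotBl rdotZl. Qed.

Lemma refl_dot_self b k (g : V) : b != 0 ->
  rdot (refl b k g) b - k = - (rdot g b - k).
Proof. by move=> nz; rewrite refl_dot coroot_self //; ring. Qed.

Lemma reflK b k (g : V) : b != 0 -> refl b k (refl b k g) = g.
Proof.
move=> nz; rewrite {1}/refl.
have -> : rdot (refl b k g) b - k = - (rdot g b - k) by apply: refl_dot_self.
by rewrite /refl scaleNr opprK subrK.
Qed.

Lemma refl0_adj b (g c : V) : rdot (refl b 0 g) c = rdot g (refl b 0 c).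
Proof.
rewrite refl_dot (rdotC g (refl b 0 c)) refl_dot !rdot_coroot subr0 subr0.
rewrite (rdotC c g) (rdotC c b) (rdotC g b); ring.
Qed.

Lemma refl0_iso b (g h : V) : b != 0 -> rdot (refl b 0 g) (refl b 0 h) = rdot g h.
Proof. by move=> nz; rewrite refl0_adj reflK. Qed.

Lemma refl0D b (g h : V) : refl b 0 (g + h) = refl b 0 g + refl b 0 h.
Proof. by rewrite /refl rdotDl !subr0 scalerDl opprD addrACA. Qed.

Lemma refl0Z b a (g : V) : refl b 0 (a *: g) = a *: refl b 0 g.
Proof. by rewrite /refl rdotZl !subr0 scalerBr -scalerA. Qed.

Lemma refl0N b (g : V) : refl b 0 (- g) = - refl b 0 g.
Proof. by rewrite -!scaleN1r refl0Z. Qed.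

Lemma refl0B b (g h : V) : refl b 0 (g - h) = refl b 0 g - refl b 0 h.
Proof. by rewrite refl0D refl0N. Qed.

Lemma refl0_self (b : V) : b != 0 -> refl b 0 b = - b.
Proof.
move=> nz; rewrite /refl subr0.
have -> : rdot b b *: coroot b = 2 *: b.
  rewrite /coroot scalerA mulrC divfK //; apply/lt0r_neq0/rdot_gt0/nz.
by rewrite scalerDl scale1r opprD addrA subrr sub0r.
Qed.

Lemma refl0_neq0 b (g : V) : b != 0 -> g != 0 -> refl b 0 g != 0.
Proof.
move=> nz gz; apply/eqP => h; move: gz; rewrite -(reflK 0 g nz) h.
have -> : refl b 0 (0 : V) = 0 by rewrite /refl rdot0l subrr scale0r subr0.
by rewrite eqxx.
Qed.

Lemma corootZ (b : V) a : a != 0 -> b != 0 -> coroot (a *: b) = a^-1 *: coroot b.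
Proof.
move=> az bz; rewrite /coroot !scalerA rdotZl rdotZr; congr (_ *: _).
have bb : rdot b b != 0 by apply/lt0r_neq0/rdot_gt0.
by field; apply/andP.
Qed.

Lemma reflZ (b : V) a k g : a != 0 -> b != 0 -> refl (a *: b) (a * k) g = refl b k g.
Proof.
move=> az bz; rewrite /refl corootZ // scalerA rdotZr; congr (g - _ *: _).
by field.
Qed.

Lemma coroot_refl0 (a b : V) : a != 0 -> refl a 0 (coroot b) = coroot (refl a 0 b).
Proof.
move=> az; rewrite /coroot refl0Z refl0_iso //.
Qed.

Lemma refl_conj0 (a b : V) k (g : V) : a != 0 ->
  refl a 0 (refl b k g) = refl (refl a 0 b) k (refl a 0 g).
Proof.
move=> az; rewrite [refl b k g]/refl refl0B refl0Z coroot_refl0 //.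
by rewrite [RHS]/refl refl0_iso.
Qed.

End Lin.


Section MarkovGen.
Variable R : realType.
Variable S : eqType.

Definition Eexp (d : seq (S * R)) (F : S -> R) : R := \sum_(x <- d) x.2 * F x.1.

Lemma E_mstep (K : S -> seq (S * R)) d F :
  Eexp (mstep K d) F = Eexp d (fun s => Eexp (K s) F).
Proof.
rewrite /Eexp /mstep big_flatten /= big_map; apply: eq_bigr => x _.
by rewrite big_map mulr_sumr; apply: eq_bigr => y _; rewrite /= mulrA.
Qed.

Lemma mprobE d (P : S -> Prop) :
  mprob d P = Eexp d (fun s => if `[< P s >] then 1 else 0).
Proof. by apply: eq_bigr => x _; case: ifP; rewrite ?mulr1 ?mulr0. Qed.

Lemma E_eq d F1 F2 : (forall x, x \in d -> F1 x.1 = F2 x.1) -> Eexp d F1 = Eexp d F2.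
Proof. by move=> H; apply: eq_big_seq => x /H ->. Qed.

Lemma mdistS (K : S -> seq (S * R)) s0 M : mdist K s0 M.+1 = mstep K (mdist K s0 M).
Proof. by rewrite /mdist iterS. Qed.

Lemma mem_mstep (K : S -> seq (S * R)) d x : x \in mstep K d ->
  exists2 y, y \in d & exists2 z, z \in K y.1 & x.1 = z.1.
Proof.
case/flattenP => r /mapP [y yd ->] /mapP [z zK ->].
by exists y => //; exists z.
Qed.

Lemma E_cons x d F : Eexp (x :: d) F = x.2 * F x.1 + Eexp d F.
Proof. by rewrite /Eexp big_cons. Qed.

Lemma E_nil F : Eexp [::] F = 0.
Proof. by rewrite /Eexp big_nil. Qed.

End MarkovGen.


Lemma int_eq0 (R : realType) (m : int) : -1 < (m%:~R : R) < 1 -> m = 0.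
Proof.
case/andP => h1 h2; move: h2; rewrite ltrz1 => h2.
have : (0 : R) < (m + 1)%:~R by rewrite intrD; lra.
rewrite ltr0z; lia.
Qed.

Lemma int_eq1 (R : realType) (m : int) : 0 < (m%:~R : R) <= 1 -> m = 1.
Proof. by case/andP; rewrite ltr0z lerz1; lia. Qed.

Lemma int_eq0' (R : realType) (m : int) : 0 <= (m%:~R : R) < 1 -> m = 0.
Proof. by case/andP; rewrite ler0z ltrz1; lia. Qed.


Section Main.
Variable R : realType.
Variable n : nat.
Local Notation V := 'rV[R]_n.
Variable Phi : seq V.
Variable alpha : 'I_n -> V.
Variable theta z0 : V.
Hypothesis HPhi : is_root_system Phi.
Hypothesis Hbase : is_base Phi alpha.
Hypothesis Htheta : is_highest_root Phi alpha theta.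
Hypothesis Hz0 : forall j, 0 < rdot z0 (alpha j).
Hypothesis Hz0t : rdot z0 theta < 1.

Local Notation pos b := (pos_root Phi alpha b).
Local Notation neg b := (pos_root Phi alpha (- b)).
Local Notation A := (Afund alpha theta).
Local Notation act := (act alpha theta).
Local Notation sgen := (Defs.sgen alpha theta).
Local Notation C := (Cone alpha).
Local Notation alcove := (alcove alpha theta).

Definition rc (x : 'I_n -> R) : V := \sum_(l < n) x l *: alpha l.

Lemma zcombE c : zcomb alpha c = rc (fun l => (c l)%:~R).
Proof. by []. Qed.

Lemma rc_indep x y : rc x = rc y -> forall l, x l = y l.
Proof.
case: Hbase => _ Hi _ H l; apply/eqP; rewrite -subr_eq0; apply/eqP.
apply: (Hi (fun l => x l - y l)); rewrite /rc in H.
under eq_bigr do rewrite scalerBl.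
by rewrite sumrB H subrr.
Qed.

Lemma rc_delta b : alpha b = rc (fun l => (l == b)%:R).
Proof.
rewrite /rc (bigD1 b) //= eqxx scale1r big1 ?addr0 // => l /negbTE ->.
by rewrite scale0r.
Qed.

Lemma rcD x y : rc x + rc y = rc (fun l => x l + y l).
Proof. by rewrite /rc -big_split; apply: eq_bigr => l _; rewrite scalerDl. Qed.

Lemma rcZ a x : a *: rc x = rc (fun l => a * x l).
Proof. by rewrite /rc scaler_sumr; apply: eq_bigr => l _; rewrite scalerA. Qed.

Lemma rcN x : - rc x = rc (fun l => - x l).
Proof. by rewrite -scaleN1r rcZ; congr rc; apply: funext => l; rewrite mulN1r. Qed.

Lemma rdot_rc g x : rdot g (rc x) = \sum_(l < n) x l * rdot g (alpha l).
Proof.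
rewrite /rc; elim/big_rec2: _ => [|l a y _ <-]; first by rewrite rdot0r.
by rewrite rdotDr rdotZr.
Qed.

Lemma alpha_in j : alpha j \in Phi.
Proof. by case: Hbase. Qed.

Lemma root_neq0 b : b \in Phi -> b != 0.
Proof. by case: HPhi => H _ _ _ _; apply: H. Qed.

Lemma alpha_neq0 j : alpha j != 0.
Proof. exact/root_neq0/alpha_in. Qed.

Lemma Phi_refl a b : a \in Phi -> b \in Phi -> refl a 0 b \in Phi.
Proof. by case: HPhi => _ _ H _ _; apply: H. Qed.

Lemma Phi_opp b : b \in Phi -> - b \in Phi.
Proof. by move=> bP; rewrite -refl0_self ?root_neq0 // Phi_refl. Qed.

Lemma Phi_int a b : a \in Phi -> b \in Phi ->
  exists z : int, rdot (coroot a) b = z%:~R.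
Proof.
case: HPhi => _ _ _ H _ aP bP; have [z Hz] := H a b aP bP.
by exists z; rewrite rdot_coroot -Hz rdotC.
Qed.

Lemma Phi_reduced a b (c : R) : a \in Phi -> b \in Phi -> b = c *: a ->
  c = 1 \/ c = -1.
Proof. by case: HPhi => _ _ _ _ H; apply: H. Qed.

Lemma theta_pos : pos theta.
Proof. by case: Htheta. Qed.

Lemma theta_in : theta \in Phi.
Proof. by case: theta_pos. Qed.

Lemma pos_in b : pos b -> b \in Phi.
Proof. by case. Qed.

Lemma neg_in b : neg b -> b \in Phi.
Proof. by case=> /Phi_opp; rewrite opprK. Qed.

Lemma pos_or_neg b : b \in Phi -> pos b \/ neg b.
Proof.
case: Hbase => _ _ H bP; have [c [Hb [Hc|Hc]]] := H b bP.
  by left; split => //; exists c.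
right; split; first exact: Phi_opp.
exists (fun l => - c l); split; last by move=> l; rewrite oppr_ge0.
by rewrite Hb !zcombE rcN; congr rc; apply: funext => l; rewrite intrN.
Qed.

Lemma rc0 : rc (fun _ => 0) = 0.
Proof. by rewrite /rc big1 // => l _; rewrite scale0r. Qed.

Lemma not_pos_neg b : pos b -> neg b -> False.
Proof.
move=> [bP [c [Hb Hc]]] [_ [d [Hd Hd0]]].
have H : rc (fun l => (c l)%:~R + (d l)%:~R) = rc (fun _ => 0).
  by rewrite -rcD -!zcombE -Hb -Hd subrr rc0.
have c0 l : (c l)%:~R = 0 :> R.
  have := rc_indep H l; have := Hc l; have := Hd0 l.
  rewrite -(ler0z R) -[0 <= c l](ler0z R); lra.
have : b = 0 by rewrite Hb zcombE -rc0; congr rc; apply: funext.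
by apply/eqP/root_neq0.
Qed.

Lemma pos_neq0_coef b : pos b -> exists c, [/\ b = zcomb alpha c, (forall i, 0 <= c i) &
   exists l, 0 < c l].
Proof.
move=> [bP [c [Hb Hc]]]; exists c; split => //.
apply/not_existsP => H.
have : b = 0.
  rewrite Hb zcombE -rc0; congr rc; apply: funext => l.
  have := H l; have := Hc l; rewrite lt_def => ->; rewrite andbT.
  by move/negP; rewrite negbK => /eqP ->.
by apply/eqP/root_neq0.
Qed.

Lemma pos_strict (q : V) b : (forall j, 0 < rdot q (alpha j)) -> pos b -> 0 < rdot q b.
Proof.
move=> Hq /pos_neq0_coef [c [-> Hc [l Hl]]].
rewrite zcombE rdot_rc (bigD1 l) //=.
apply: (@lt_le_trans _ _ ((c l)%:~R * rdot q (alpha l))).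
  by apply: mulr_gt0 => //; rewrite ltr0z.
rewrite lerDl; apply: sumr_ge0 => k _; apply: mulr_ge0; last exact: ltW.
by rewrite ler0z.
Qed.

Lemma pos_weak (q : V) b : (forall j, 0 <= rdot q (alpha j)) -> pos b -> 0 <= rdot q b.
Proof.
move=> Hq [_ [c [-> Hc]]]; rewrite zcombE rdot_rc.
by apply: sumr_ge0 => k _; apply: mulr_ge0 => //; rewrite ler0z.
Qed.

Lemma neg_strict (q : V) b : (forall j, 0 < rdot q (alpha j)) -> neg b -> rdot q b < 0.
Proof. by move=> Hq /(pos_strict Hq); rewrite rdotNr oppr_gt0. Qed.

Lemma neg_weak (q : V) b : (forall j, 0 <= rdot q (alpha j)) -> neg b -> rdot q b <= 0.
Proof. by move=> Hq /(pos_weak Hq); rewrite rdotNr oppr_ge0. Qed.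

Lemma alpha_pos j : pos (alpha j).
Proof.
split; first exact: alpha_in.
exists (fun l => (l == j)%:R); split; last by move=> l; case: (l == j).
by rewrite zcombE rc_delta; congr rc; apply: funext => l; case: (l == j).
Qed.

Lemma alpha_inj i j : alpha i = alpha j -> i = j.
Proof.
rewrite !rc_delta => /rc_indep /(_ i); rewrite eqxx.
by case: eqP => // _ /eqP; rewrite oner_eq0.
Qed.

Lemma reflE (a b : V) : refl a 0 b = b - (rdot (coroot a) b) *: a.
Proof.
rewrite /refl subr0 /coroot scalerA rdot_coroot rdotC; congr (b - _ *: a).
by rewrite mulrA [_ * 2]mulrC.
Qed.

Lemma posS b j : pos b -> b <> alpha j -> pos (refl (alpha j) 0 b).
Proof.
move=> bpos bne.
have sP : refl (alpha j) 0 b \in Phi by apply: Phi_refl; [exact: alpha_in|exact: pos_in].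
have [//|sneg] := pos_or_neg sP.
exfalso; move: bpos sneg => [bP [c [Hb Hc]]] [_ [d [Hd Hd0]]].
set r := rdot (coroot (alpha j)) b.
have E : rc (fun l => (c l)%:~R + (d l)%:~R) = rc (fun l => r * (l == j)%:R).
  rewrite -rcD -!zcombE -Hb -Hd reflE opprB addrCA subrr addr0.
  by rewrite -/r (rc_delta j) rcZ.
have cl l : l != j -> (c l)%:~R = 0 :> R.
  move=> lj; have := rc_indep E l; rewrite (negbTE lj) mulr0.
  have := Hc l; have := Hd0 l; rewrite -(ler0z R) -[0 <= c l](ler0z R); lra.
have bE : b = (c j)%:~R *: alpha j.
  rewrite Hb zcombE rc_delta rcZ; congr rc; apply: funext => l.
  by case: (eqVneq l j) => [->|lj]; rewrite ?eqxx ?mulr1 // cl // mulr0.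
have [c1|cm1] := Phi_reduced (alpha_in j) bP bE.
  by apply: bne; rewrite bE c1 scale1r.
have := Hc j; rewrite -(ler0z R) cm1; lra.
Qed.

Lemma NP i j : i != j -> rdot (coroot (alpha j)) (alpha i) <= 0.
Proof.
move=> ij.
have ne : alpha i <> alpha j by move/alpha_inj/eqP; rewrite (negbTE ij).
have [_ [d [Hd Hd0]]] := posS (alpha_pos i) ne.
move: Hd; rewrite reflE zcombE (rc_delta i) (rc_delta j) rcZ rcN rcD.
move/esym/rc_indep/(_ j); rewrite eqxx (eq_sym j i) (negbTE ij) mulr1 add0r.
have := Hd0 j; rewrite -(ler0z R); lra.
Qed.

Lemma highest b : pos b -> exists d : 'I_n -> int,
  theta - b = zcomb alpha d /\ forall i, 0 <= d i.
Proof. by case: Htheta => _; apply. Qed.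

Lemma theta_dom j : 0 <= rdot (coroot (alpha j)) theta.
Proof.
case: (eqVneq theta (alpha j)) => [->|ne].
  by rewrite coroot_self ?alpha_neq0 // ler0n.
have [d [Hd Hd0]] := highest (posS theta_pos (elimN eqP ne)).
move: Hd; rewrite reflE opprB addrCA subrr addr0 zcombE rc_delta rcZ.
move/rc_indep/(_ j); rewrite eqxx mulr1 => ->; rewrite ler0z; exact: Hd0.
Qed.

Lemma zcomb_weak (q : V) d : (forall j, 0 <= rdot q (alpha j)) -> (forall l, 0 <= d l) ->
  0 <= rdot q (zcomb alpha d).
Proof.
move=> Hq Hd; rewrite zcombE rdot_rc.
by apply: sumr_ge0 => k _; apply: mulr_ge0 => //; rewrite ler0z.
Qed.

Lemma le_theta (q : V) b : (forall j, 0 <= rdot q (alpha j)) -> pos b ->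
  rdot q b <= rdot q theta.
Proof.
move=> Hq bp; have [d [Hd Hd0]] := highest bp.
have := zcomb_weak Hq Hd0; rewrite -Hd rdotBr; lra.
Qed.

Lemma A_pos_bound g b : A g -> pos b -> 0 <= rdot g b <= 1.
Proof.
move=> [Hg Hgt] bp; apply/andP; split; first exact: pos_weak Hg bp.
exact: le_trans (le_theta Hg bp) Hgt.
Qed.

Lemma A_root_bound g b : A g -> b \in Phi -> -1 <= rdot g b <= 1.
Proof.
move=> gA bP; case: (pos_or_neg bP) => [/(A_pos_bound gA)|/(A_pos_bound gA)].
  lra.
rewrite rdotNr; lra.
Qed.

Lemma z0_in_A : A z0.
Proof. by split; [move=> j; apply: ltW|apply: ltW]. Qed.

Lemma z0_pos_bound b : pos b -> 0 < rdot z0 b < 1.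
Proof.
move=> bp; apply/andP; split; first exact: pos_strict Hz0 bp.
exact: le_lt_trans (le_theta (fun j => ltW (Hz0 j)) bp) Hz0t.
Qed.

Lemma z0_notint b (m : int) : b \in Phi -> rdot z0 b - m%:~R != 0.
Proof.
move=> bP; rewrite subr_eq0; apply/eqP => E.
case: (pos_or_neg bP) => [/z0_pos_bound|/z0_pos_bound]; rewrite ?rdotNr E.
  move=> /andP[h1 h2]; have m0 : m = 0 by apply: (@int_eq0' R); rewrite h2 ltW.
  by move: h1; rewrite m0 ltxx.
rewrite -intrN => /andP[h1 h2].
have m0 : - m = 0 by apply: (@int_eq0' R); rewrite h2 ltW.
by move: h1; rewrite m0 ltxx.
Qed.


Definition ws (s : option 'I_n) : V := if s is Some j then alpha j else theta.
Definition cs (s : option 'I_n) : int := if s is Some _ then 0 else 1.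

Lemma sgenE s g : sgen s g = refl (ws s) (cs s)%:~R g.
Proof. by case: s. Qed.

Lemma wallE s : wall alpha theta s = hyp (ws s) (cs s)%:~R.
Proof. by case: s. Qed.

Lemma ws_in s : ws s \in Phi.
Proof. case: s => [j|]; [exact: alpha_in j|exact: theta_in]. Qed.

Lemma ws_neq0 s : ws s != 0.
Proof. exact/(root_neq0)/ws_in. Qed.

Lemma sum_eq0_pos (c : 'I_n -> int) (x : 'I_n -> R) :
  (forall l, 0 <= c l) -> (forall l, 0 <= x l) ->
  \sum_(l < n) (c l)%:~R * x l = 0 -> forall l, (c l)%:~R * x l = 0.
Proof.
move=> Hc Hx /eqP; rewrite psumr_eq0 => [/allP H l|l _].
  by apply/eqP; apply: H; rewrite mem_index_enum.
by apply: mulr_ge0 => //; rewrite ler0z.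
Qed.

Lemma wall_point s : exists q : V,
  [/\ A q, sgen s q = q &
      forall g (m : int), g \in Phi -> rdot q g = m%:~R ->
        (g = ws s /\ m = cs s) \/ (g = - ws s /\ m = - cs s)].
Proof.
suff [q [qA qs H]] : exists q : V, [/\ A q, sgen s q = q &
      forall g (m : int), pos g -> rdot q g = m%:~R -> g = ws s /\ m = cs s].
  exists q; split => // g m gP E.
  case: (pos_or_neg gP) => [gp|gn]; first by left; apply: H.
  right; have [] := H _ (- m) gn; first by rewrite rdotNr E intrN.
  by move=> <- <-; rewrite !opprK.
case: s => [j|].
- set q := z0 - (rdot z0 (alpha j) / 2) *: coroot (alpha j).
  have qa l : rdot q (alpha l) = rdot z0 (alpha l) - rdot z0 (alpha j) / 2 * rdot (coroot (alpha j)) (alpha l).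
    by rewrite /q rdotBl rdotZl.
  have qj : rdot q (alpha j) = 0.
    by rewrite qa coroot_self ?(alpha_neq0) //; field.
  have qo l : l != j -> 0 < rdot q (alpha l).
    move=> lj; rewrite qa; have := NP lj; have := Hz0 l; have := Hz0 j.
    move=> h1 h2 h3; have : 0 <= rdot z0 (alpha j) / 2 * - rdot (coroot (alpha j)) (alpha l).
      by apply: mulr_ge0; lra.
    lra.
  have qge l : 0 <= rdot q (alpha l).
    by case: (eqVneq l j) => [->|/qo/ltW //]; rewrite qj.
  have qt : rdot q theta < 1.
    have := theta_dom j; have := Hz0 j.
    rewrite /q rdotBl rdotZl => h1 h2.
    have : 0 <= rdot z0 (alpha j) / 2 * rdot (coroot (alpha j)) theta by apply: mulr_ge0; lra.
    set t := _ * rdot (coroot (alpha j)) theta => t0; apply: le_lt_trans Hz0t; lra.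
  exists q; split.
  + by split => //; exact: ltW.
  + by rewrite /= /refl qj subrr scale0r subr0.
  move=> g m gp E.
  have m0 : m = 0.
    apply: (@int_eq0' R); rewrite -E; apply/andP; split; first exact: pos_weak qge gp.
    exact: le_lt_trans (le_theta qge gp) qt.
  split => //; move: gp => [gP [c [Hg Hc]]].
  rewrite m0 Hg zcombE rdot_rc in E; have H0 := sum_eq0_pos Hc qge E.
  have cl l : l != j -> (c l)%:~R = 0 :> R.
    by move=> lj; have := H0 l; move/eqP; rewrite mulf_eq0 (gt_eqF (qo l lj)) orbF => /eqP.
  have gE : g = (c j)%:~R *: alpha j.
    rewrite Hg zcombE rc_delta rcZ; congr rc; apply: funext => l.
    by case: (eqVneq l j) => [->|lj]; rewrite ?eqxx ?mulr1 // cl // mulr0.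
  have [c1|cm1] := Phi_reduced (alpha_in j) gP gE.
    by rewrite gE c1 scale1r.
  exfalso; have := Hc j; rewrite -(ler0z R) cm1; lra.
- have tp : 0 < rdot z0 theta by apply: pos_strict Hz0 (theta_pos).
  set q := (rdot z0 theta)^-1 *: z0.
  have qa l : 0 < rdot q (alpha l).
    by rewrite /q rdotZl; apply: mulr_gt0; rewrite ?invr_gt0.
  have qt : rdot q theta = 1 by rewrite /q rdotZl mulVf ?gt_eqF.
  exists q; split.
  + by split; [move=> l; exact: ltW|rewrite qt].
  + by rewrite /= /refl qt subrr scale0r subr0.
  move=> g m gp E.
  have m1 : m = 1.
    apply: (@int_eq1 R); rewrite -E; apply/andP; split; first exact: pos_strict qa gp.
    by rewrite -qt; apply: le_theta gp => l; exact: ltW.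
  split => //; have [d [Hd Hd0]] := highest gp.
  have : rdot q (theta - g) = 0 by rewrite rdotBr qt E m1 subrr.
  rewrite Hd zcombE rdot_rc => /(sum_eq0_pos Hd0 (fun l => ltW (qa l))) H0.
  have : theta - g = 0.
    rewrite Hd zcombE -(rc0); congr rc; apply: funext => l.
    by have := H0 l; move/eqP; rewrite mulf_eq0 (gt_eqF (qa l)) orbF => /eqP.
  by move/eqP; rewrite subr_eq0 => /eqP.
Qed.

Definition G (w : seq 'I_n) := act (map Some w).

Lemma act_cons a u g : act (a :: u) g = act u (sgen a g).
Proof. by []. Qed.

Lemma act_cat u1 u2 g : act (u1 ++ u2) g = act u2 (act u1 g).
Proof. by rewrite /Defs.act foldl_cat. Qed.

Lemma act_nil g : act [::] g = g.
Proof. by []. Qed.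

Lemma ws_nz s : ws s != 0.
Proof. exact: ws_neq0 s. Qed.

Lemma sgenK a g : sgen a (sgen a g) = g.
Proof. by rewrite !sgenE reflK // ws_nz. Qed.

Lemma act_revK v g : act (rev v) (act v g) = g.
Proof.
elim: v g => [//|a v IH] g.
by rewrite act_cons rev_cons -cats1 act_cat IH /= sgenK.
Qed.

Lemma act_Krev v y : act v (act (rev v) y) = y.
Proof. by rewrite -{1}(revK v) act_revK. Qed.

Lemma G_cons j w g : G (j :: w) g = G w (refl (alpha j) 0 g).
Proof. by []. Qed.

Lemma G_cat w1 w2 g : G (w1 ++ w2) g = G w2 (G w1 g).
Proof. by rewrite /G map_cat act_cat. Qed.

Lemma G_adj w y c : rdot (G w y) c = rdot y (G (rev w) c).
Proof.
elim: w y c => [//|j w IH] y c.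
by rewrite G_cons IH refl0_adj rev_cons -cats1 G_cat.
Qed.

Lemma G_root w b : b \in Phi -> G w b \in Phi.
Proof.
elim: w b => [//|j w IH] b bP; rewrite G_cons; apply: IH.
by apply: Phi_refl => //; apply: alpha_in j.
Qed.

Lemma G_neq0 w b : b != 0 -> G w b != 0.
Proof.
elim: w b => [//|j w IH] b bP; rewrite G_cons; apply: IH.
by apply: refl0_neq0 => //; apply: alpha_neq0 j.
Qed.

Lemma refl_aff (b g : V) k : refl b k g = refl b 0 g + k *: coroot b.
Proof. by rewrite /refl subr0 scalerBl opprB addrCA addrC. Qed.

Lemma refl0_coroot (b : V) : b != 0 -> refl b 0 (coroot b) = - coroot b.
Proof. by move=> bz; rewrite /coroot refl0Z refl0_self // scalerN. Qed.

Lemma sgen_conj a b k g : b != 0 ->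
  sgen a (refl b k g) =
  refl (refl (ws a) 0 b)
       (k - (if a is None then rdot (coroot theta) b else 0)) (sgen a g).
Proof.
move=> bz; have tz : theta != 0 by have := ws_nz None.
case: a => [j|] /=.
  by rewrite subr0 refl_conj0 // (alpha_neq0).
rewrite !(refl_aff theta _ 1) scale1r refl_conj0 //.
set b' := refl theta 0 b; set h := refl theta 0 g.
rewrite /refl rdotDl; have -> : rdot (coroot theta) b' = - rdot (coroot theta) b.
  by rewrite /b' -refl0_adj refl0_coroot // rdotNl.
rewrite [RHS]addrAC; congr (_ - _ *: _ + _); ring.
Qed.

Lemma act_conj u b k : b != 0 -> exists b' k', b' != 0 /\
  forall g, act u (refl b k g) = refl b' k' (act u g).
Proof.
elim: u b k => [|a u IH] b k bz; first by exists b, k.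
have bz' : refl (ws a) 0 b != 0 by apply: refl0_neq0 => //; apply: ws_nz.
have [b' [k' [bz'' H]]] := IH _ (k - (if a is None then rdot (coroot theta) b else 0)) bz'.
exists b', k'; split => // g.
by rewrite !act_cons sgen_conj // H.
Qed.

Lemma PB u b (k : int) : b \in Phi -> exists g0 (m : int), g0 \in Phi /\
  forall g, rdot (act u g) b - k%:~R = rdot g g0 - m%:~R.
Proof.
elim: u b k => [|a u IH] b k bP; first by exists b, k.
have [g1 [m1 [g1P H]]] := IH b k bP.
case: a => [j|].
  exists (refl (alpha j) 0 g1), m1; split.
    by apply: Phi_refl => //; apply: alpha_in j.
  by move=> g; rewrite act_cons H /= refl0_adj.
have tP : theta \in Phi by apply: theta_in.
have [z Hz] := Phi_int tP g1P.
exists (refl theta 0 g1), (m1 - z); split; first exact: Phi_refl.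
move=> g; rewrite act_cons H /= refl_aff rdotDl refl0_adj rdotZl mul1r Hz intrB.
ring.
Qed.

Local Open Scope classical_set_scope.

Lemma refl_id (a b : V) k : a != 0 -> b != 0 ->
  (forall y, rdot (refl b k y) a = - rdot y a) -> forall y, refl b k y = refl a 0 y.
Proof.
move=> az bz H; set c := rdot (coroot b) a.
have H1 y : (rdot y b - k) * c = 2 * rdot y a.
  by have := H y; rewrite refl_dot -/c => h; lra.
have cz : c != 0.
  apply/eqP => c0; have := H1 a; rewrite c0 mulr0 => /esym/eqP.
  rewrite mulf_eq0 pnatr_eq0 /= => /eqP/rdot_eq0/eqP; by rewrite (negbTE az).
have k0 : k = 0.
  have := H1 0; rewrite !rdot0l mulr0 => /eqP; rewrite mulf_eq0 (negbTE cz) orbF.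
  by rewrite sub0r oppr_eq0 => /eqP.
have bE : b = (2 / c) *: a.
  apply: rdot_ext => y; rewrite rdotZr; have := H1 y; rewrite k0 subr0 => h.
  by apply: (mulIf cz); rewrite h mulrAC divfK.
move=> y; rewrite bE k0 -(mulr0 (2 / c)) reflZ //.
  by rewrite mulr0.
by rewrite mulf_neq0 ?invr_eq0 ?pnatr_eq0.
Qed.

Lemma hyp_eq (b : V) k (b' : V) c : b != 0 ->
  hyp b k = [set g | rdot g b' = c] -> exists l, b' = l *: b /\ c = l * k.
Proof.
move=> bz H.
have HH g : (rdot g b = k) = (rdot g b' = c) by exact: (congr1 (fun P => P g) H).
have bb : rdot b b != 0 by apply/lt0r_neq0/rdot_gt0.
set p0 := (k / rdot b b) *: b.
have p0b : rdot p0 b = k by rewrite /p0 rdotZl divfK.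
have p0c : rdot p0 b' = c by rewrite -HH.
set l := rdot b' b / rdot b b; set d := b' - l *: b.
have db : rdot d b = 0 by rewrite /d rdotBl rdotZl /l divfK // rdotC subrr.
have dc : rdot d b' = 0.
  have : rdot (p0 + d) b' = c by rewrite -HH rdotDl p0b db addr0.
  by rewrite rdotDl p0c; lra.
have d0 : d = 0.
  apply: rdot_eq0; rewrite {2}/d rdotBr dc rdotZr db mulr0 subr0 //.
have b'E : b' = l *: b by apply/eqP; rewrite -subr_eq0 -/d d0.
exists l; split => //; by rewrite -p0c b'E rdotZr p0b.
Qed.

Lemma z0_root_bound b : b \in Phi -> -1 < rdot z0 b < 1.
Proof.
move=> bP; case: (pos_or_neg bP) => [bp|bn].
  have := z0_pos_bound bp; lra.
have := z0_pos_bound bn; rewrite rdotNr; lra.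
Qed.

Lemma sep_char (b : V) (m : int) (X : set V) : b \in Phi -> m != 0 ->
  separates (hyp b m%:~R) X A <-> (forall x, X x -> 0 <= m%:~R * (rdot x b - m%:~R)).
Proof.
move=> bP mz; have bz := root_neq0 bP.
set mr : R := m%:~R.
have mr1 : 1 <= mr \/ mr <= -1.
  rewrite /mr; case: (ltP 0 m) => h.
    by left; rewrite ler1z; lia.
  by right; rewrite -(mulrN1z 1) ler_int; lia.
have Ab g : A g -> -1 <= rdot g b <= 1 by move=> gA; apply: (A_root_bound).
split.
- move=> [b' [c [b'z Hh HX HY]]].
  have [l [b'E cE]] := hyp_eq bz Hh.
  have lz : l != 0 by apply/eqP => l0; move: b'z; rewrite b'E l0 scale0r eqxx.
  have := HY z0 (z0_in_A); rewrite /= b'E rdotZr cE => hz.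
  have := z0_root_bound bP => /andP[h1 h2].
  move=> x /HX; rewrite /= b'E rdotZr cE => hx.
  have : l < 0 \/ 0 < l by move: lz; rewrite neq_lt => /orP.
  case: mr1 => Hm [hl|hl]; nra.
- move=> H; exists (- mr *: b), (- (mr * mr)); split.
  + by rewrite scaler_eq0 negb_or oppr_eq0 /mr intr_eq0 mz bz.
  + apply/seteqP; split => g /=; rewrite rdotZr /mr => h.
      by rewrite h mulNr.
    have : mr * (rdot g b - mr) = 0 by rewrite /mr; lra.
    by move/eqP; rewrite mulf_eq0 intr_eq0 (negbTE mz) /= subr_eq0 => /eqP.
  + by move=> x /H; rewrite /= rdotZr -/mr; lra.
  + move=> g /Ab; rewrite /= rdotZr -/mr => h; case: mr1 => Hm; nra.
Qed.


Lemma int_gtm1 (m : int) : (-1 : R) < m%:~R -> (0 <= m)%R.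
Proof.
move=> h; have : (0:R) < (m + 1)%:~R by rewrite intrD; lra.
by rewrite ltr0z; lia.
Qed.

Lemma intr0R : ((0 : int)%:~R : R) = 0.
Proof. by rewrite mulr0z. Qed.

Lemma Hsep_id v s : exists g0 (m : int), g0 \in Phi /\
  forall y, rdot (act (rev v) y) (ws s) - (cs s)%:~R = rdot y g0 - m%:~R.
Proof. exact: PB (ws_in s). Qed.

Lemma HsepE v s g0 (m : int) :
  (forall y, rdot (act (rev v) y) (ws s) - (cs s)%:~R = rdot y g0 - m%:~R) ->
  Hsep alpha theta v s = hyp g0 m%:~R.
Proof.
move=> H; rewrite /Hsep wallE; apply/seteqP; split => y /=.
  case=> g gW <-; have := H (act v g); rewrite act_revK.
  by move: gW; rewrite /hyp /= => ->; lra.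
move=> hy; exists (act (rev v) y); last exact: act_Krev.
by rewrite /hyp /=; have := H y; rewrite hy subrr; lra.
Qed.

Lemma facet v s : alcove v `<=` C -> ~ (alcove (s :: v) `<=` C) ->
  exists j, forall g, act v (sgen s g) = refl (alpha j) 0 (act v g).
Proof.
move=> Hv Hsv.
have [y Hy] : exists y, ~ (alcove (s :: v) y -> C y) by apply/existsNP.
move/not_implyP: Hy => [[g1 g1A Eg1] Cy]; subst y.
have [j Hj] : exists j, rdot (act (s :: v) g1) (alpha j) < 0.
  have [j Hj] : exists j, ~ (0 <= rdot (act (s :: v) g1) (alpha j)) by apply/existsNP.
  by exists j; rewrite ltNge; apply/negP.
have [gam [m [gP Hf]]] := PB (s :: v) 0 (alpha_in j).
have [q [qA qs Hq]] := wall_point s.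
have h1 : 0 <= rdot q gam - m%:~R.
  rewrite -Hf intr0R subr0 act_cons qs; apply: Hv; by exists q.
have h2 : rdot g1 gam - m%:~R < 0 by rewrite -Hf intr0R subr0.
have qm : rdot q gam = m%:~R.
  have := A_root_bound g1A gP => /andP[b1 b2].
  have := A_root_bound qA gP => /andP[b3 b4].
  have m0 : (0 <= m)%R by apply: int_gtm1; lra.
  case: (ltP 0 m) => hm.
    have : (1 : R) <= m%:~R by rewrite ler1z; lia.
    lra.
  have m00 : m = 0 by lia.
  move: h1 h2; rewrite m00 intr0R !subr0 => h1 h2.
  case: (pos_or_neg gP) => [gp|gn].
    by have := A_pos_bound g1A gp => /andP[]; lra.
  by have := A_pos_bound qA gn => /andP[]; rewrite rdotNr; lra.
have [eps Heps] : exists eps : R,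
    forall g, rdot g gam - m%:~R = eps * (rdot g (ws s) - (cs s)%:~R).
  case: (Hq gam m gP qm) => [[-> ->]|[-> ->]].
    by exists 1 => g; rewrite mul1r.
  by exists (-1) => g; rewrite rdotNr intrN; ring.
have Hanti g : rdot (act v (sgen s g)) (alpha j) = - rdot (act v g) (alpha j).
  have e1 := Hf g; have e2 := Hf (sgen s g).
  rewrite !act_cons sgenK in e1 e2; rewrite Heps in e1; rewrite Heps in e2.
  move: e1 e2; rewrite sgenE refl_dot_self ?ws_neq0 // intr0R !subr0 => -> ->.
  by rewrite mulrN opprK.
have [b' [k' [b'z Hc]]] := act_conj v ((cs s)%:~R) (ws_neq0 s).
have Hr : forall y, refl b' k' y = refl (alpha j) 0 y.
  apply: refl_id => //; first exact: alpha_neq0.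
  by move=> y; rewrite -(act_Krev v y) -Hc -sgenE Hanti.
by exists j => g; rewrite sgenE Hc Hr.
Qed.

Lemma Del bs : forall b, pos b -> neg (G bs b) -> exists bs',
  (size bs' < size bs)%N /\ forall y, G bs (refl b 0 y) = G bs' y.
Proof.
elim: bs => [|j bs IH] b bp bn; first by case: (not_pos_neg bp bn).
case: (eqVneq b (alpha j)) => [->|ne].
  by exists bs; split => // y; rewrite G_cons reflK //; exact: alpha_neq0.
have ne' : b <> alpha j by apply/eqP.
have gp := posS bp ne'.
have [bs0 [Hs Hb]] := IH _ gp bn.
exists (j :: bs0); split => // y.
by rewrite !G_cons refl_conj0 ?alpha_neq0 // Hb.
Qed.

Lemma U N0 : forall w, (size w <= N0)%N -> forall p, (forall j, 0 < rdot p (alpha j)) ->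
  (forall j, 0 <= rdot (G w p) (alpha j)) -> forall y, G w y = y.
Proof.
elim: N0 => [|N0 IH] w; first by case: w.
case/lastP: w => [//|w' i] Hs p Hp HG y.
have Gr z : G (rcons w' i) z = refl (alpha i) 0 (G w' z) by rewrite -cats1 G_cat.
have h : rdot p (G (rev w') (alpha i)) <= 0.
  have := HG i; rewrite Gr refl0_adj refl0_self ?alpha_neq0 // rdotNr G_adj.
  by rewrite oppr_ge0.
have dn : neg (G (rev w') (alpha i)).
  have dP : G (rev w') (alpha i) \in Phi by apply: G_root; exact: alpha_in.
  case: (pos_or_neg dP) => // dp; have := pos_strict Hp dp.
  by rewrite ltNge h.
have [bs' [Hsz Hbs]] := Del (alpha_pos i) dn.
have E z : G (rcons w' i) z = G (rev bs') z.
  apply: rdot_ext => c; rewrite !(rdotC c) Gr refl0_adj G_adj Hbs.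
  by rewrite G_adj revK.
rewrite E; apply: (IH _ _ p Hp).
  by move: Hs Hsz; rewrite !size_rev size_rcons; lia.
by move=> j; rewrite -E; exact: HG.
Qed.

Lemma G_revK w g : G (rev w) (G w g) = g.
Proof. by rewrite /G map_rev act_revK. Qed.

Lemma p_strict v : alcove v `<=` C -> forall j, 0 < rdot (act v z0) (alpha j).
Proof.
move=> Hv j.
have Cz : C (act v z0) by apply: Hv; exists z0 => //; exact: z0_in_A.
have [g0 [m [gP H]]] := PB v 0 (alpha_in j).
have := H z0; have := z0_notint m gP; rewrite intr0R subr0 => nz e.
by rewrite lt_def Cz andbT e.
Qed.

Lemma hr_unique u x v : is_hat_rep alpha theta u x -> is_hat_rep alpha theta u v ->
  weq alpha theta x v.
Proof.
move=> [Hx [w1 E1]] [Hv [w2 E2]] g.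
have Ex h : act x h = G (rev w2 ++ w1) (act v h).
  by rewrite G_cat E2 act_cat G_revK E1 act_cat.
have HU := U (leqnn (size (rev w2 ++ w1))) (p_strict Hv).
rewrite Ex HU // => j; rewrite -Ex; apply: Hx; exists z0 => //; exact: z0_in_A.
Qed.

Lemma hr_nil : is_hat_rep alpha theta [::] [::].
Proof. by split; [move=> y [g [gA _] <-]|exists [::]]. Qed.

Lemma hr_step1 u v s : is_hat_rep alpha theta u v -> alcove (s :: v) `<=` C ->
  is_hat_rep alpha theta (s :: u) (s :: v).
Proof. by move=> [_ [w E]] Hc; split => //; exists w => g; rewrite act_cons E. Qed.

Lemma hr_step2 u v s : is_hat_rep alpha theta u v -> ~ (alcove (s :: v) `<=` C) ->
  is_hat_rep alpha theta (s :: u) v.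
Proof.
move=> [Hv [w E]] Hn; have [j Hj] := facet Hv Hn; split => //.
exists (rcons w j) => g.
rewrite -cats1 map_cat catA act_cat.
change (act v g = sgen (Some j) (act (u ++ map Some w) (sgen s g))).
rewrite -E Hj /= reflK //; exact: alpha_neq0.
Qed.

Definition sep u s := separates (Hsep alpha theta u s) (alcove u) A.

Lemma sep_lump u v s : is_hat_rep alpha theta u v -> alcove (s :: v) `<=` C ->
  (sep u s <-> sep v s).
Proof.
move=> [Hv [w E]] Hsv.
have [g0 [m [gP Hm]]] := Hsep_id v s.
have m0 : m != 0.
  apply/eqP => m0; move: Hm; rewrite m0 intr0R => Hm.
  have e1 := Hm (act v z0); have e2 := Hm (act v (sgen s z0)).
  rewrite act_revK in e1; rewrite act_revK sgenE refl_dot_self ?ws_neq0 // in e2.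
  have /eqP nz := z0_notint (cs s) (ws_in s).
  have C1 : C (act v z0) by apply: Hv; exists z0 => //; exact: z0_in_A.
  have C2 : C (act v (sgen s z0)) by apply: Hsv; exists z0 => //; exact: z0_in_A.
  case: (pos_or_neg gP) => [gp|gn].
    by rewrite sgenE in C2; have := pos_weak C1 gp; have := pos_weak C2 gp; move: e1 e2 nz; rewrite !subr0; lra.
  by rewrite sgenE in C2; have := neg_weak C1 gn; have := neg_weak C2 gn; move: e1 e2 nz; rewrite !subr0; lra.
have Hu y : rdot (act (rev u) y) (ws s) - (cs s)%:~R = rdot y (G (rev w) g0) - m%:~R.
  have -> : act (rev u) y = act (rev v) (G w y).
    by rewrite -[act (rev u) y](act_revK v) E act_cat act_Krev.
  by rewrite Hm G_adj.
have Kg g : rdot (act u g) (G (rev w) g0) = rdot (act v g) g0.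
  by rewrite -G_adj E act_cat.
have gP' : G (rev w) g0 \in Phi by apply: G_root.
rewrite /sep (HsepE Hu) (HsepE Hm) !sep_char //.
split => H x [g gA <-].
  by rewrite -Kg; apply: H; exists g.
by rewrite Kg; apply: H; exists g.
Qed.

Variable ii : nat -> option 'I_n.
Variable N : nat.
Variable p : R.

Local Notation Kt := (tilde_kernel alpha theta ii N p).
Local Notation Kh := (hat_kernel alpha theta ii N p).
Local Notation hr := (is_hat_rep alpha theta).
Local Notation weq := (weq alpha theta).
Local Notation St := (seq (option 'I_n) * nat)%type.

Definition good u := exists v, hr u v.
Definition pi u := match pselect (good u) with left H => proj1_sig (cid H) | right _ => u end.

Lemma piP u : good u -> hr u (pi u).
Proof. by rewrite /pi; case: pselect => // H _; exact: (proj2_sig (cid H)). Qed.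

Definition invF (F : St -> R) := forall a b k, weq a b -> F (a, k) = F (b, k).

Lemma act_weq a b : weq a b -> act a = act b.
Proof. by move=> H; apply: funext. Qed.

Lemma weq_cons s a b : weq a b -> weq (s :: a) (s :: b).
Proof. by move=> H g; rewrite !act_cons H. Qed.

Lemma weq_sym a b : weq a b -> weq b a.
Proof. by move=> H g; rewrite H. Qed.

Lemma weq_trans a b c : weq a b -> weq b c -> weq a c.
Proof. by move=> H1 H2 g; rewrite H1 H2. Qed.

Lemma hr_weq u v x : hr u v -> weq v x -> hr u x.
Proof.
move=> [Hv [w E]] H; split; first by rewrite /Defs.alcove -(act_weq H).
by exists w; apply: weq_trans (weq_sym H) E.
Qed.

Lemma good_step u k y : good u -> y \in Kt (u, k) -> good y.1.1.
Proof.
move=> [v Hv]; rewrite /tilde_kernel /=.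
have gs : good (ii k :: u).
  case: (pselect (alcove (ii k :: v) `<=` C)) => Hc.
    by exists (ii k :: v); apply: hr_step1.
  by exists v; apply: hr_step2.
case: asboolP => _; rewrite !inE.
  by move/eqP => -> /=; exists v.
by case/orP => /eqP -> //=; exists v.
Qed.

Lemma hat_inv F a b k : invF F -> weq a b -> Eexp (Kh (a, k)) F = Eexp (Kh (b, k)) F.
Proof.
move=> HF H; rewrite /hat_kernel /=.
have E1 := act_weq H; have E2 := act_weq (weq_cons (ii k) H).
rewrite /Defs.alcove /Hsep E1 E2.
case: asboolP => _; rewrite !E_cons ?E_nil /=.
  by rewrite (HF _ _ _ (weq_cons _ H)) (HF _ _ _ H).
by rewrite (HF _ _ _ H).
Qed.

Lemma lump F u k : invF F -> good u ->
  Eexp (Kt (u, k)) (fun s => F (pi s.1, s.2)) = Eexp (Kh (pi u, k)) F.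
Proof.
move=> HF gu; have Hv := piP gu; set v := pi u in Hv *.
rewrite /tilde_kernel /hat_kernel /=.
set s := ii k; set k' := (k.+1 %% N)%N.
case: asboolP => Ht; case: asboolP => Hh; rewrite !E_cons ?E_nil /=.
- exfalso; case: Hh => Hns Hc; apply: Hns; exact: (sep_lump Hv Hc).1 Ht.
- by [].
- case: Hh => Hns Hc.
  have W : weq (pi (s :: u)) (s :: v).
    have gs : good (s :: u) by exists (s :: v); exact: hr_step1 Hv Hc.
    exact: hr_unique (piP gs) (hr_step1 Hv Hc).
  by rewrite (HF _ _ _ W).
- case: (pselect (alcove (s :: v) `<=` C)) => Hc.
    exfalso; apply: Ht; apply/(sep_lump Hv Hc).
    by apply: contrapT => Hn; apply: Hh.
  have W : weq (pi (s :: u)) v.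
    have gs : good (s :: u) by exists v; exact: hr_step2 Hv Hc.
    exact: hr_unique (piP gs) (hr_step2 Hv Hc).
  rewrite (HF _ _ _ W); ring.
Qed.

Lemma main_ind M : (forall x, x \in mdist Kt ([::], 0%N) M -> good x.1.1) /\
  forall F, invF F -> Eexp (mdist Kt ([::], 0%N) M) (fun s => F (pi s.1, s.2)) =
                     Eexp (mdist Kh ([::], 0%N) M) F.
Proof.
elim: M => [|M [IH1 IH2]].
  split; first by move=> x; rewrite /mdist /= inE => /eqP -> /=; exists [::]; apply: hr_nil.
  move=> F HF; rewrite /mdist /= !E_cons !E_nil /=.
  have W : weq (pi [::]) [::].
    have gs : good [::] by exists [::]; apply: hr_nil.
    exact: hr_unique (piP gs) hr_nil.
  by rewrite (HF _ _ _ W).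
split.
  move=> x; rewrite mdistS => /mem_mstep [y yd [z zK ->]].
  have := IH1 y yd; case: y yd zK => [[u k] w] /= _ zK gu.
  exact: good_step gu zK.
move=> F HF; rewrite !mdistS !E_mstep.
rewrite (@E_eq _ _ _ _ (fun s => Eexp (Kh (pi s.1, s.2)) F)); last first.
  move=> [[u k] w] /IH1 /= gu; exact: lump.
apply: IH2 => a b k H; exact: hat_inv.
Qed.

Lemma final M x :
  mprob (mdist Kh ([::], 0%N) M) (fun s => weq s.1 x) =
  mprob (mdist Kt ([::], 0%N) M) (fun s => hr s.1 x).
Proof.
rewrite !mprobE -(main_ind M).2; last first.
  move=> a b k H /=; congr (if _ then _ else _); apply: congr1; apply: propext.
  by split => H2; [apply: weq_trans (weq_sym H) H2|apply: weq_trans H H2].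
apply: E_eq => -[[u k] w] /(main_ind M).1 /= gu.
congr (if _ then _ else _); apply: congr1; apply: propext; split.
  by move=> H; apply: hr_weq (piP gu) H.
by move=> H; exact: hr_unique (piP gu) H.
Qed.

End Main.

Theorem lemma3p1 (R : realType) (n : nat) (Phi : seq 'rV[R]_n)
  (alpha : 'I_n -> 'rV[R]_n) (theta z0 eta : 'rV[R]_n) (p : R)
  (i : nat -> option 'I_n) (N : nat) :
  is_root_system Phi -> irreducible_rs Phi -> is_base Phi alpha ->
  is_highest_root Phi alpha theta ->
  (forall j, 0 < rdot z0 (alpha j)) -> rdot z0 theta < 1 ->
  0 < p < 1 ->
  in_Upsilon Phi alpha z0 eta ->
  ray_alcove_seq alpha theta z0 eta i ->
  is_min_period i N ->
  forall (M : nat) (x : seq (option 'I_n)),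
    mprob (mdist (hat_kernel alpha theta i N p) ([::], 0%N) M)
          (fun s => weq alpha theta s.1 x)
    = mprob (mdist (tilde_kernel alpha theta i N p) ([::], 0%N) M)
          (fun s => is_hat_rep alpha theta s.1 x).
Proof.
move=> HPhi _ Hbase Htheta Hz0 Hz0t _ _ _ _ M x.
exact: (final HPhi Hbase Htheta Hz0 Hz0t i N p M x).
Qed.
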